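(* Let $n_x,n_\beta\ge 1$, $A\in\mathbb{R}^{n_x\times n_x}$, $u\in\mathbb{R}^{n_x}$, $L\in\mathbb{R}^{n_x\times n_\beta}$, $Q_\beta\in\mathbb{R}^{n_\beta\times n_\beta}$ a diffusion (covariance) matrix, $\overline{x}_a\in\mathbb{R}^{n_x}$, $P_a\in\mathbb{R}^{n_x\times n_x}$ a covariance matrix, $\mu>0$ and $\Delta t_k>0$. For $t\ge 0$ define $$m(t)=\exp(At)\overline{x}_a+\int_0^t\exp(A\tau)\,d\tau\, u,\qquad C(t)=\exp(At)P_a\exp(A^Tt)+\int_0^t \exp(A\tau)LQ_\beta L^T\exp(A^T\tau)\,d\tau .$$ Let $T$ be a random time lag with density $p_k(t)=\frac{\mu}{1-e^{-\mu\Delta t_k}}e^{-\mu t}\chi_{[0,\Delta t_k)}(t)$, and consider the single-target birth density $p_k(x)=\int_0^{\Delta t_k}\mathcal{N}(x;m(t),C(t))p_k(t)\,dt$ (a mixture whose conditional mean and covariance given lag $t$ are $\mathrm{E}[x_k|t]=m(t)$ and $\mathrm{C}[x_k|t]=C(t)$). Then the mean of $p_k$ is $$\overline{x}_{b,k}=\mathrm{E}[m(T)]=\overline{x}_{b,k,1}+\overline{x}_{b,k,2},$$ where, with $I$ the $n_x\times n_x$ identity and $0_{m,n}$ the $m\times n$ zero matrix, $$\overline{x}_{b,k,1}=\frac{\mu}{1-e^{-\mu\Delta t_k}}\begin{bmatrix}I & 0_{n_x,1}\end{bmatrix}\exp(\overline{A}_b\Delta t_k)\begin{bmatrix}0_{n_x,1}\\1\end{bmatrix},\quad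 \overline{x}_{b,k,2}=\frac{\mu}{1-e^{-\mu\Delta t_k}}\begin{bmatrix}I & 0_{n_x,2}\end{bmatrix}\exp(\overline{A}_{b,u}\Delta t_k)\begin{bmatrix}0_{n_x+1,1}\\1\end{bmatrix},$$ $$\overline{A}_b=\begin{bmatrix}A-\mu I & \overline{x}_a\\ 0_{1,n_x} & 0\end{bmatrix},\qquad \overline{A}_{b,u}=\begin{bmatrix}A-\mu I & u & 0_{n_x,1}\\ 0_{1,n_x} & -\mu & 1\\ 0_{1,n_x} & 0 & 0\end{bmatrix}.$$ The covariance matrix of $p_k$ is $P_{b,k}=\mathrm{C}[m(T)]+\mathrm{E}[C(T)]$, where $$\mathrm{E}[C(T)]=-\frac{e^{-\mu\Delta t_k}}{1-e^{-\mu\Delta t_k}}\int_0^{\Delta t_k}\exp(A\tau)LQ_\beta L^T\exp(A^T\tau)\,d\tau+\frac{1}{1-e^{-\mu\Delta t_k}}\int_0^{\Delta t_k}\exp\big((A-\tfrac{\mu}{2}I)t\big)C_b\exp\big((A-\tfrac{\mu}{2}I)^Tt\big)\,dt,$$ with $C_b=LQ_\beta L^T+\mu P_a$, and $$\mathrm{C}[m(T)]=\Sigma_{xx}+\Sigma_{xu}+\Sigma_{xu}^T+\Sigma_{uu}-\overline{x}_{b,k}\overline{x}_{b,k}^T,$$ where $$\Sigma_{xx}=\frac{\mu}{1-e^{-\mu\Delta t_k}}\int_0^{\Delta t_k}\exp\big((A-\tfrac{\mu}{2}I)t\big)\overline{x}_a\overline{x}_a^T\exp\big((A-\tfrac{\mu}{2}I)^Tt\big)dt,$$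 $$\Sigma_{xu}=\frac{\mu}{1-e^{-\mu\Delta t_k}}\int_0^{\Delta t_k}\exp\big((A-\mu I)t\big)\overline{x}_a u^T\Big(\int_0^t\exp(A^T\tau)d\tau\Big)dt,$$ $\Sigma_{uu}=-\Sigma_{uu,1}+\Sigma_{uu,2}+\Sigma_{uu,2}^T$, $$\Sigma_{uu,1}=\frac{e^{-\mu\Delta t_k}}{1-e^{-\mu\Delta t_k}}\int_0^{\Delta t_k}\exp(A\tau)d\tau\, uu^T\int_0^{\Delta t_k}\exp(A^T\tau)d\tau,$$ $$\Sigma_{uu,2}=\frac{1}{1-e^{-\mu\Delta t_k}}\int_0^{\Delta t_k}\exp\big((A-\mu I)t\big)uu^T\Big(\int_0^t\exp(A^T\tau)d\tau\Big)dt.$$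
   Context: This arises from a continuous-time multi-target model: targets appear at times of a Poisson process, each appearing target is distributed as $\mathcal{N}(\overline{x}_a,P_a)$ at appearance, its life span is exponential with rate $\mu$, and it moves according to the linear time-invariant SDE $dx(t)=Ax(t)dt+u\,dt+L\,d\beta(t)$ with $\beta$ a Brownian motion with diffusion matrix $Q_\beta$. A target newly born at measurement time $t_k$ (with $\Delta t_k=t_k-t_{k-1}$) is one that appeared at time $t_k-t$ with lag $t\in[0,\Delta t_k)$ and is still alive at $t_k$; the lag has the truncated exponential density $p_k(t)$ above and, given the lag, the target state at $t_k$ is Gaussian with mean $m(t)$ and covariance $C(t)$. $\chi_{[0,\Delta t_k)}$ is the indicator function of $[0,\Delta t_k)$. *)

(* Defs.v *)
From HB Require Import structures.
From mathcomp Require Import all_boot all_order all_algebra.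
From mathcomp Require Import all_classical all_reals all_analysis.
Set Implicit Arguments. Unset Strict Implicit. Unset Printing Implicit Defensive.
Import Order.TTheory GRing.Theory Num.Theory.
Import numFieldNormedType.Exports.
Local Open Scope classical_set_scope.
Local Open Scope ring_scope.

Section Defs.
Variable R : realType.

Definition expm (n : nat) (M : 'M[R]_n) : 'M[R]_n :=
  \matrix_(i, j) limn (fun N => \sum_(0 <= k < N) ((M ^+ k) i j / (k`!)%:R)).

Definition mxint (m n : nat) (D : set R) (F : R -> 'M[R]_(m, n)) : 'M[R]_(m, n) :=
  \matrix_(i, j) Rintegral lebesgue_measure D (fun t => F t i j).

Definition lag_const (mu dt : R) : R := mu / (1 - expR (- mu * dt)).

Definition lag_density (mu dt : R) (t : R) : R :=
  if (0 <= t) && (t < dt) then lag_const mu dt * expR (- mu * t) else 0.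

Definition lagE (mu dt : R) (m n : nat) (F : R -> 'M[R]_(m, n)) : 'M[R]_(m, n) :=
  mxint setT (fun t => lag_density mu dt t *: F t).

Definition mean_t (nx : nat) (A : 'M[R]_nx) (u xa : 'cV[R]_nx) (t : R) : 'cV[R]_nx :=
  expm (t *: A) *m xa + mxint `[0, t] (fun tau => expm (tau *: A)) *m u.

Definition cov_t (nx nb : nat) (A : 'M[R]_nx) (L : 'M[R]_(nx, nb)) (Q : 'M[R]_nb)
  (Pa : 'M[R]_nx) (t : R) : 'M[R]_nx :=
  expm (t *: A) *m Pa *m expm (t *: A^T)
  + mxint `[0, t] (fun tau => expm (tau *: A) *m L *m Q *m L^T *m expm (tau *: A^T)).

(* mean of the mixture p_k(x) = int N(x; m(t), C(t)) p_k(t) dt,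
   computed from the conditional moments (law of total expectation) *)
Definition birth_mean nx (A : 'M[R]_nx) u xa mu dt : 'cV[R]_nx :=
  lagE mu dt (mean_t A u xa).

(* covariance of the mixture (law of total covariance from conditional moments):
   E[C(T) + m(T) m(T)^T] - mean mean^T *)
Definition birth_cov nx nb (A : 'M[R]_nx) (L : 'M[R]_(nx, nb)) Q Pa u xa mu dt
  : 'M[R]_nx :=
  lagE mu dt (fun t => cov_t A L Q Pa t + mean_t A u xa t *m (mean_t A u xa t)^T)
  - birth_mean A u xa mu dt *m (birth_mean A u xa mu dt)^T.

Definition is_cov (n : nat) (M : 'M[R]_n) : Prop :=
  M^T = M /\ forall v : 'cV[R]_n, 0 <= (v^T *m M *m v) ord0 ord0.

End Defs.

(* Main.v *)
Require Import Defs.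
From HB Require Import structures.
From mathcomp Require Import all_boot all_order all_algebra.
From mathcomp Require Import all_classical all_reals all_analysis.
From mathcomp Require Import ring lra.
Set Implicit Arguments. Unset Strict Implicit. Unset Printing Implicit Defensive.
Import Order.TTheory GRing.Theory Num.Theory.
Import numFieldNormedType.Exports.
Local Open Scope classical_set_scope.
Local Open Scope ring_scope.

Section ExpM.
Variable R : realType.

Definition coefs n (M : 'M[R]_n) (p : nat) (i j : 'I_n) (k : nat) : R :=
  (M ^+ (k + p)) i j / (k`!)%:R.

Definition mxB n (M : 'M[R]_n) : R := \sum_i \sum_j `|M i j|.

Lemma mxB_ge0 n (M : 'M[R]_n) : 0 <= mxB M.
Proof. by apply: sumr_ge0 => i _; apply: sumr_ge0. Qed.

Lemma row_le_B n (M : 'M[R]_n) i : \sum_l `|M i l| <= mxB M.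
Proof.
rewrite /mxB [leRHS](bigD1 i) //= lerDl; apply: sumr_ge0 => *; exact: sumr_ge0.
Qed.

Lemma pow_bound n (M : 'M[R]_n) k i j : `|(M ^+ k) i j| <= mxB M ^+ k.
Proof.
elim: k i j => [|k IH] i j.
  rewrite expr0 !mxE; case: (i == j); rewrite ?normr1 ?normr0 //.
rewrite exprS -mulmxE mxE.
apply: (le_trans (ler_norm_sum _ _ _)).
apply: (@le_trans _ _ (\sum_l `|M i l| * mxB M ^+ k)).
  apply: ler_sum => l _; rewrite normrM; apply: ler_wpM2l => //.
rewrite -mulr_suml exprS; apply: ler_wpM2r; first exact: exprn_ge0 (mxB_ge0 M).
exact: row_le_B.
Qed.

Lemma coefs_cvg n (M : 'M[R]_n) p i j x : cvgn (pseries (coefs M p i j) x).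
Proof.
apply: normed_cvg.
pose B := mxB M.
apply: (@series_le_cvg _ _ (fun k => B ^+ p * exp_coeff (B * `|x|) k)).
- by move=> k; exact: normr_ge0.
- move=> k; rewrite /exp_coeff /= mulr_ge0 ?exprn_ge0 ?mxB_ge0 ?divr_ge0 ?exprn_ge0 ?mulr_ge0 ?mxB_ge0 //.
- move=> k; rewrite /= /coefs /exp_coeff /= normrM normrM normrX normfV.
  have -> : B ^+ p * ((B * `|x|) ^+ k / k`!%:R) = B ^+ (k + p) / k`!%:R * `|x| ^+ k.
    by rewrite exprMn exprD; ring.
  rewrite normr_nat.
  apply: ler_wpM2r; first exact: exprn_ge0.
  apply: ler_wpM2r; first by rewrite invr_ge0 ler0n.
  exact: pow_bound.
- apply: is_cvg_seriesZ; exact: is_cvg_series_exp_coeff.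
Qed.

Lemma coefs_diffs n (M : 'M[R]_n) p i j :
  pseries_diffs (coefs M p i j) = coefs M p.+1 i j.
Proof.
apply/funext => k; rewrite /pseries_diffs /coefs factS natrM invfM addSnnS.
have hk : (k.+1%:R : R) != 0 by rewrite pnatr_eq0.
by field; rewrite pnatr_eq0 -lt0n fact_gt0 /= addrC natr1 pnatr_eq0.
Qed.


Lemma exprZmx n (M : 'M[R]_n) (t : R) k : (t *: M) ^+ k = t ^+ k *: M ^+ k.
Proof.
elim: k => [|k IH]; first by rewrite !expr0 scale1r.
by rewrite !exprS -!mulmxE IH -scalemxAl -scalemxAr scalerA.
Qed.

Lemma expm_entry n (M : 'M[R]_n) t i j :
  expm (t *: M) i j = limn (pseries (coefs M 0 i j) t).
Proof.
rewrite /expm mxE.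
suff -> : (fun N => \sum_(0 <= k < N) ((t *: M) ^+ k) i j / (k`!)%:R) =
  pseries (coefs M 0 i j) t by [].
apply/funext => N; rewrite /pseries /series /=.
apply: eq_bigr => k _; rewrite exprZmx mxE /coefs addn0; ring.
Qed.

Lemma cvg_sum_fin n (u : 'I_n -> nat -> R) (l : 'I_n -> R) :
  (forall k, u k n @[n --> \oo] --> l k) ->
  (fun N => \sum_k u k N) @ \oo --> \sum_k l k.
Proof.
move=> H; rewrite -fct_sumE.
elim/big_ind2 : _ => //; first exact: cvg_cst.
by move=> f a g b Hf Hg; apply: cvgD.
Qed.

Lemma coefs1_lim_l n (M : 'M[R]_n) i j x :
  limn (pseries (coefs M 1 i j) x) = (M *m expm (x *: M)) i j.
Proof.
rewrite mxE; apply: cvg_lim => //.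
have -> : pseries (coefs M 1 i j) x =
   (fun N => \sum_l M i l * pseries (coefs M 0 l j) x N).
  apply/funext => N; rewrite /pseries /series /=.
  under [RHS]eq_bigr do rewrite mulr_sumr.
  rewrite [RHS]exchange_big /=; apply: eq_bigr => k _.
  rewrite /coefs addn1 exprS -mulmxE mxE !mulr_suml; apply: eq_bigr => l _.
  by rewrite addn0; ring.
apply: cvg_sum_fin => l; rewrite expm_entry.
by apply: cvgMr; exact: coefs_cvg.
Qed.

Lemma coefs1_lim_r n (M : 'M[R]_n) i j x :
  limn (pseries (coefs M 1 i j) x) = (expm (x *: M) *m M) i j.
Proof.
rewrite mxE; apply: cvg_lim => //.
have -> : pseries (coefs M 1 i j) x =
   (fun N => \sum_l pseries (coefs M 0 i l) x N * M l j).
  apply/funext => N; rewrite /pseries /series /=.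
  under [RHS]eq_bigr do rewrite mulr_suml.
  rewrite [RHS]exchange_big /=; apply: eq_bigr => k _.
  rewrite /coefs addn1 exprSr -mulmxE mxE !mulr_suml; apply: eq_bigr => l _.
  by rewrite addn0; ring.
apply: cvg_sum_fin => l; rewrite expm_entry.
by apply: cvgMl; exact: coefs_cvg.
Qed.

Lemma expm_derive n (M : 'M[R]_n) i j (x : R) :
  is_derive x 1 (fun t => expm (t *: M) i j) ((expm (x *: M) *m M) i j).
Proof.
rewrite -coefs1_lim_r.
have -> : (fun t => expm (t *: M) i j) = (fun t => limn (pseries (coefs M 0 i j) t)).
  by apply/funext => t; rewrite expm_entry.
rewrite -coefs_diffs.
apply: (@pseries_snd_diffs _ _ (`|x| + 1)).
- exact: coefs_cvg.
- rewrite coefs_diffs; exact: coefs_cvg.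
- rewrite !coefs_diffs; exact: coefs_cvg.
- by rewrite [ltRHS]ger0_norm ?addr_ge0 // ltrDl.
Qed.

Lemma expm_comm n (M : 'M[R]_n) x : M *m expm (x *: M) = expm (x *: M) *m M.
Proof.
by apply/matrixP => i j; rewrite -coefs1_lim_l coefs1_lim_r.
Qed.

Lemma expm0 n (M : 'M[R]_n) : expm (0 *: M) = 1%:M.
Proof.
apply/matrixP => i j; rewrite expm_entry.
apply: lim_near_cst => //; near=> N.
have N1 : (0 < N)%N by near: N; exists 1%N.
rewrite /pseries /series /= -(prednK N1) big_nat_recl // big1 ?addr0.
  by rewrite expr0 mulr1 /coefs addn0 expr0 fact0 divr1.
by move=> k _; rewrite expr0n mulr0.
Unshelve. all: by end_near.
Qed.

Lemma trmxX n (M : 'M[R]_n) k : (M^T) ^+ k = (M ^+ k)^T.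
Proof.
elim: k => [|k IH]; first by rewrite !expr0 tr_scalar_mx.
by rewrite exprSr IH exprS -!mulmxE trmx_mul.
Qed.

Lemma expm_tr n (M : 'M[R]_n) t : expm (t *: M^T) = (expm (t *: M))^T.
Proof.
apply/matrixP => i j; rewrite [RHS]mxE !expm_entry.
suff -> : pseries (coefs M^T 0 i j) t = pseries (coefs M 0 j i) t by [].
apply/funext => N; rewrite /pseries /series /=; apply: eq_bigr => k _.
by rewrite /coefs trmxX mxE.
Qed.

End ExpM.
Section Calc.
Variable R : realType.
Local Notation mu := (@lebesgue_measure R).

Lemma Dder (f : R -> R) (x df : R) : is_derive x 1 f df -> derivable f x 1.
Proof. by case. Qed.

Lemma Dval (f : R -> R) (x df : R) : is_derive x 1 f df -> 'D_1 f x = df.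
Proof. by case. Qed.

Lemma D_cont (f : R -> R) (x df : R) : is_derive x 1 f df -> {for x, continuous f}.
Proof.
move=> H; apply: differentiable_continuous; apply/derivable1_diffP.
exact: Dder H.
Qed.

Lemma D_mulf (f g : R -> R) (x df dg : R) : is_derive x 1 f df -> is_derive x 1 g dg ->
  is_derive x 1 (fun t => f t * g t) (df * g x + f x * dg).
Proof.
move=> Hf Hg; have := is_deriveM Hf Hg.
by rewrite /GRing.scale /= addrC [g x * _]mulrC.
Qed.

Lemma D_addf (f g : R -> R) (x df dg : R) : is_derive x 1 f df -> is_derive x 1 g dg ->
  is_derive x 1 (fun t => f t + g t) (df + dg).
Proof. by move=> Hf Hg; have := is_deriveD Hf Hg. Qed.

Lemma D_oppf (f : R -> R) (x df : R) : is_derive x 1 f df ->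
  is_derive x 1 (fun t => - f t) (- df).
Proof. by move=> H; exact: (is_deriveN H). Qed.

Lemma D_cstf (c x : R) : is_derive x 1 (fun _ : R => c) 0.
Proof. exact: is_derive_cst. Qed.

Lemma D_id (x : R) : is_derive x 1 (fun t : R => t) 1.
Proof. exact: is_derive_id. Qed.

Lemma D_sumf n (h : 'I_n -> R -> R) (dh : 'I_n -> R) (x : R) :
  (forall k, is_derive x 1 (h k) (dh k)) ->
  is_derive x 1 (fun t => \sum_k h k t) (\sum_k dh k).
Proof. by move=> H; rewrite -fct_sumE; apply: is_derive_sum. Qed.

Lemma D_expR (c x : R) : is_derive x 1 (fun t => expR (c * t)) (c * expR (c * x)).
Proof.
have H1 : is_derive x 1 (fun t => c * t) c.
  by have := D_mulf (D_cstf c x) (D_id x); rewrite mul0r add0r mulr1.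
have := is_derive1_comp (is_derive_expR (c * x)) H1.
by rewrite mulrC.
Qed.

Lemma C_sumf n (h : 'I_n -> R -> R) (x : R) :
  (forall k, {for x, continuous (h k)}) ->
  {for x, continuous (fun t => \sum_k h k t)}.
Proof.
move=> H; rewrite -fct_sumE.
elim/big_ind : _ => //; first exact: cst_continuous.
by move=> f g Hf Hg; apply: continuousD.
Qed.

Lemma C_mulf (f g : R -> R) (x : R) : {for x, continuous f} -> {for x, continuous g} ->
  {for x, continuous (fun t => f t * g t)}.
Proof. by move=> Hf Hg; apply: continuousM. Qed.

Lemma C_addf (f g : R -> R) (x : R) : {for x, continuous f} -> {for x, continuous g} ->
  {for x, continuous (fun t => f t + g t)}.
Proof. by move=> Hf Hg; apply: continuousD. Qed.

Lemma ftc2 (a : R) (F phi f : R -> R) (s : R) : a < 0 -> 0 <= s ->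
  (forall x, a < x -> is_derive x 1 F (phi x)) ->
  (forall x, a < x -> {for x, continuous f}) ->
  (forall x, 0 <= x <= s -> f x = phi x) ->
  \int[mu]_(t in `[0, s]) f t = F s - F 0.
Proof.
move=> a0 s0 dF cf fphi.
case: (ltgtP s 0) s0 => [|s_pos|->] s0.
- by move=> *; lra.
- rewrite /Rintegral (@continuous_FTC2 _ f F _ _ s_pos) /=.
  + by [].
  + apply: continuous_in_subspaceT => y; rewrite inE /= in_itv /= => /andP[y0 _].
    by apply: cf; apply: lt_le_trans y0.
  + split.
    * move=> y; rewrite in_itv /= => /andP[y0 _]; apply: Dder.
      by apply: dF; apply: lt_trans y0.
    * by apply: cvg_at_right_filter; apply: D_cont (dF 0 a0).
    * by apply: cvg_at_left_filter; apply: D_cont (dF s (lt_trans a0 s_pos)).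
  + move=> y; rewrite in_itv /= => /andP[y0 ys]; rewrite derive1E fphi ?(ltW y0) ?(ltW ys) //.
    by apply: Dval; apply: dF; apply: lt_trans y0.
- by rewrite set_itv1 Rintegral_set1 subrr.
Qed.

Definition prim (a : R) (f : R -> R) (x : R) : R := \int[mu]_(t in `[a, x]) f t.

Lemma prim_derive (b a : R) (f : R -> R) : b < a ->
  (forall x, b < x -> {for x, continuous f}) ->
  forall x, a < x -> is_derive x 1 (prim a f) (f x).
Proof.
move=> ba cf x ax.
have xu : x < x + 1 by rewrite ltrDl.
have intf : mu.-integrable `[a, x + 1] (EFin \o f).
  apply: continuous_compact_integrable; first exact: segment_compact.
  apply: continuous_in_subspaceT => y; rewrite inE /= in_itv /= => /andP[ay _].
  by apply: cf; apply: lt_le_trans ay.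
have [H1 H2] := continuous_FTC1_closed xu intf ax (cf x (lt_trans ba ax)).
apply: DeriveDef; first exact: H1.
by rewrite -derive1E; exact: H2.
Qed.

End Calc.
Section MxCalc.
Variable R : realType.
Local Notation mu := (@lebesgue_measure R).

Definition mxD (a : R) m n (F F' : R -> 'M[R]_(m, n)) :=
  forall x, a < x -> forall i j, is_derive x 1 (fun t => F t i j) (F' x i j).
Definition mxC (a : R) m n (F : R -> 'M[R]_(m, n)) :=
  forall x, a < x -> forall i j, {for x, continuous (fun t => F t i j)}.
Definition sD (a : R) (f f' : R -> R) := forall x, a < x -> is_derive x 1 f (f' x).
Definition sC (a : R) (f : R -> R) := forall x, a < x -> {for x, continuous f}.

Lemma mxD_C a m n (F F' : R -> 'M[R]_(m,n)) : mxD a F F' -> mxC a F.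
Proof. by move=> H x ax i j; apply: D_cont (H x ax i j). Qed.

Lemma sD_C a (f f' : R -> R) : sD a f f' -> sC a f.
Proof. by move=> H x ax; apply: D_cont (H x ax). Qed.

Lemma mxD_mono a b m n (F F' : R -> 'M[R]_(m,n)) : a <= b -> mxD a F F' -> mxD b F F'.
Proof. by move=> ab H x bx; apply: H; apply: le_lt_trans bx. Qed.

Lemma mxC_mono a b m n (F : R -> 'M[R]_(m,n)) : a <= b -> mxC a F -> mxC b F.
Proof. by move=> ab H x bx; apply: H; apply: le_lt_trans bx. Qed.

Lemma sC_mono a b (f : R -> R) : a <= b -> sC a f -> sC b f.
Proof. by move=> ab H x bx; apply: H; apply: le_lt_trans bx. Qed.

Lemma mxD_eq a m n (F F' G' : R -> 'M[R]_(m,n)) :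
  mxD a F F' -> (forall x, a < x -> F' x = G' x) -> mxD a F G'.
Proof. by move=> H E x ax i j; rewrite -E //; apply: H. Qed.

Lemma mxD_ext a m n (F G F' : R -> 'M[R]_(m,n)) :
  (forall t, F t = G t) -> mxD a F F' -> mxD a G F'.
Proof. by move=> E; have -> : G = F by apply/funext => t; rewrite E. Qed.

Lemma mxC_ext a m n (F G : R -> 'M[R]_(m,n)) :
  (forall t, F t = G t) -> mxC a F -> mxC a G.
Proof. by move=> E; have -> : G = F by apply/funext => t; rewrite E. Qed.

Lemma mxD_cst a m n (M : 'M[R]_(m,n)) : mxD a (fun _ => M) (fun _ => 0).
Proof. by move=> x _ i j; rewrite mxE; apply: D_cstf. Qed.

Lemma mxC_cst a m n (M : 'M[R]_(m,n)) : mxC a (fun _ => M).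
Proof. by move=> x _ i j; apply: cst_continuous. Qed.

Lemma mxD_add a m n (F G F' G' : R -> 'M[R]_(m,n)) : mxD a F F' -> mxD a G G' ->
  mxD a (fun t => F t + G t) (fun t => F' t + G' t).
Proof.
move=> HF HG x ax i j.
have -> : (fun t => (F t + G t) i j) = (fun t => F t i j + G t i j).
  by apply/funext => t; rewrite mxE.
by rewrite mxE; exact: D_addf (HF x ax i j) (HG x ax i j).
Qed.

Lemma mxC_add a m n (F G : R -> 'M[R]_(m,n)) : mxC a F -> mxC a G ->
  mxC a (fun t => F t + G t).
Proof.
move=> HF HG x ax i j.
have -> : (fun t => (F t + G t) i j) = (fun t => F t i j + G t i j).
  by apply/funext => t; rewrite mxE.
exact: C_addf (HF x ax i j) (HG x ax i j).
Qed.

Lemma mxD_opp a m n (F F' : R -> 'M[R]_(m,n)) : mxD a F F' ->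
  mxD a (fun t => - F t) (fun t => - F' t).
Proof.
move=> HF x ax i j.
have -> : (fun t => (- F t) i j) = (fun t => - F t i j).
  by apply/funext => t; rewrite mxE.
by rewrite mxE; apply: D_oppf; apply: HF.
Qed.

Lemma mxC_opp a m n (F : R -> 'M[R]_(m,n)) : mxC a F -> mxC a (fun t => - F t).
Proof.
move=> HF x ax i j.
have -> : (fun t => (- F t) i j) = (fun t => (-1) * F t i j).
  by apply/funext => t; rewrite mxE mulN1r.
apply: (C_mulf (f := fun _ => -1) (g := fun t => F t i j)); first exact: cst_continuous.
exact: HF.
Qed.

Lemma mxD_mul a m n p (F F' : R -> 'M[R]_(m,n)) (G G' : R -> 'M[R]_(n,p)) :
  mxD a F F' -> mxD a G G' ->
  mxD a (fun t => F t *m G t) (fun t => F' t *m G t + F t *m G' t).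
Proof.
move=> HF HG x ax i j.
have -> : (fun t => (F t *m G t) i j) = (fun t => \sum_k F t i k * G t k j).
  by apply/funext => t; rewrite mxE.
rewrite !mxE -big_split /=.
apply: (D_sumf (h := fun k t => F t i k * G t k j)) => k.
exact: D_mulf (HF x ax i k) (HG x ax k j).
Qed.

Lemma mxC_mul a m n p (F : R -> 'M[R]_(m,n)) (G : R -> 'M[R]_(n,p)) :
  mxC a F -> mxC a G -> mxC a (fun t => F t *m G t).
Proof.
move=> HF HG x ax i j.
have -> : (fun t => (F t *m G t) i j) = (fun t => \sum_k F t i k * G t k j).
  by apply/funext => t; rewrite mxE.
apply: (C_sumf (h := fun k t => F t i k * G t k j)) => k.
exact: C_mulf (HF x ax i k) (HG x ax k j).
Qed.

Lemma mxD_scale a m n (f f' : R -> R) (F F' : R -> 'M[R]_(m,n)) :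
  sD a f f' -> mxD a F F' ->
  mxD a (fun t => f t *: F t) (fun t => f' t *: F t + f t *: F' t).
Proof.
move=> Hf HF x ax i j.
have -> : (fun t => (f t *: F t) i j) = (fun t => f t * F t i j).
  by apply/funext => t; rewrite mxE.
rewrite !mxE; exact: D_mulf (Hf x ax) (HF x ax i j).
Qed.

Lemma mxC_scale a m n (f : R -> R) (F : R -> 'M[R]_(m,n)) :
  sC a f -> mxC a F -> mxC a (fun t => f t *: F t).
Proof.
move=> Hf HF x ax i j.
have -> : (fun t => (f t *: F t) i j) = (fun t => f t * F t i j).
  by apply/funext => t; rewrite mxE.
exact: C_mulf (Hf x ax) (HF x ax i j).
Qed.

Lemma mxD_tr a m n (F F' : R -> 'M[R]_(m,n)) : mxD a F F' ->
  mxD a (fun t => (F t)^T) (fun t => (F' t)^T).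
Proof.
move=> HF x ax i j.
have -> : (fun t => (F t)^T i j) = (fun t => F t j i).
  by apply/funext => t; rewrite mxE.
by rewrite mxE; apply: HF.
Qed.

Lemma mxC_tr a m n (F : R -> 'M[R]_(m,n)) : mxC a F -> mxC a (fun t => (F t)^T).
Proof.
move=> HF x ax i j.
have -> : (fun t => (F t)^T i j) = (fun t => F t j i).
  by apply/funext => t; rewrite mxE.
by apply: HF.
Qed.

Lemma mxD_row a m n1 n2 (F F' : R -> 'M[R]_(m,n1)) (G G' : R -> 'M[R]_(m,n2)) :
  mxD a F F' -> mxD a G G' ->
  mxD a (fun t => row_mx (F t) (G t)) (fun t => row_mx (F' t) (G' t)).
Proof.
move=> HF HG x ax i j.
have -> : (fun t => row_mx (F t) (G t) i j) =
  (fun t => match fintype.split j with inl k => F t i k | inr k => G t i k end).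
  by apply/funext => t; rewrite mxE.
by rewrite mxE; case: (fintype.split j) => k; [apply: HF|apply: HG].
Qed.

Lemma mxD_col a m1 m2 n (F F' : R -> 'M[R]_(m1,n)) (G G' : R -> 'M[R]_(m2,n)) :
  mxD a F F' -> mxD a G G' ->
  mxD a (fun t => col_mx (F t) (G t)) (fun t => col_mx (F' t) (G' t)).
Proof.
move=> HF HG x ax i j.
have -> : (fun t => col_mx (F t) (G t) i j) =
  (fun t => match fintype.split i with inl k => F t k j | inr k => G t k j end).
  by apply/funext => t; rewrite mxE.
by rewrite mxE; case: (fintype.split i) => k; [apply: HF|apply: HG].
Qed.

Lemma mxD_block a m1 m2 n1 n2 (F1 F1' : R -> 'M[R]_(m1,n1)) (F2 F2' : R -> 'M[R]_(m1,n2))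
  (F3 F3' : R -> 'M[R]_(m2,n1)) (F4 F4' : R -> 'M[R]_(m2,n2)) :
  mxD a F1 F1' -> mxD a F2 F2' -> mxD a F3 F3' -> mxD a F4 F4' ->
  mxD a (fun t => block_mx (F1 t) (F2 t) (F3 t) (F4 t))
        (fun t => block_mx (F1' t) (F2' t) (F3' t) (F4' t)).
Proof.
move=> H1 H2 H3 H4; rewrite /block_mx.
by apply: mxD_col; apply: mxD_row.
Qed.

Lemma mxD_scalar a n (f f' : R -> R) : sD a f f' ->
  mxD a (fun t => (f t)%:M : 'M[R]_n) (fun t => (f' t)%:M).
Proof.
move=> Hf x ax i j.
have -> : (fun t => ((f t)%:M : 'M[R]_n) i j) = (fun t => f t * (i == j)%:R).
  by apply/funext => t; rewrite mxE mulr_natr.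
rewrite mxE -[f' x *+ _]mulr_natr.
have := D_mulf (Hf x ax) (D_cstf ((i == j)%:R) x).
by rewrite mulr0 addr0 => H.
Qed.

Lemma mxD_expm a n (M : 'M[R]_n) :
  mxD a (fun t => expm (t *: M)) (fun t => expm (t *: M) *m M).
Proof. by move=> x _ i j; apply: expm_derive. Qed.

Lemma mxC_expm a n (M : 'M[R]_n) : mxC a (fun t => expm (t *: M)).
Proof. apply: mxD_C; exact: mxD_expm. Qed.

Lemma sD_expR a (c : R) : sD a (fun t => expR (c * t)) (fun t => c * expR (c * t)).
Proof. by move=> x _; apply: D_expR. Qed.

Lemma sC_expR a (c : R) : sC a (fun t => expR (c * t)).
Proof. apply: sD_C; exact: sD_expR. Qed.

Lemma sC_cst a (c : R) : sC a (fun _ => c).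
Proof. by move=> x _; apply: cst_continuous. Qed.

Lemma sC_mul a (f g : R -> R) : sC a f -> sC a g -> sC a (fun t => f t * g t).
Proof. by move=> Hf Hg x ax; apply: C_mulf (Hf x ax) (Hg x ax). Qed.

Definition mxprim (a : R) m n (F : R -> 'M[R]_(m,n)) (t : R) : 'M[R]_(m,n) :=
  \matrix_(i, j) (prim a (fun s => F s i j) t - prim a (fun s => F s i j) 0).

Lemma mxprim_D (b a : R) m n (F : R -> 'M[R]_(m,n)) : b < a -> mxC b F ->
  mxD a (mxprim a F) F.
Proof.
move=> ba HF x ax i j.
have -> : (fun t => mxprim a F t i j) =
  (fun t => prim a (fun s => F s i j) t + (- prim a (fun s => F s i j) 0)).
  by apply/funext => t; rewrite mxE.
rewrite -[F x i j]addr0.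
have H := prim_derive (f := fun s => F s i j) ba (fun y by_ => HF y by_ i j) ax.
exact: D_addf H (D_cstf _ x).
Qed.

Lemma mxprim0 a m n (F : R -> 'M[R]_(m,n)) : mxprim a F 0 = 0.
Proof. by apply/matrixP => i j; rewrite !mxE subrr. Qed.

Lemma mxFTC (a : R) m n (Phi phi f : R -> 'M[R]_(m,n)) (s : R) :
  a < 0 -> 0 <= s -> mxD a Phi phi -> mxC a f ->
  (forall t, 0 <= t <= s -> f t = phi t) ->
  mxint `[0, s] f = Phi s - Phi 0.
Proof.
move=> a0 s0 HD HC E; apply/matrixP => i j; rewrite !mxE.
apply: (ftc2 (F := fun t => Phi t i j) (phi := fun t => phi t i j) (f := fun t => f t i j) a0 s0).
- by move=> x ax; exact: HD.
- by move=> x ax; exact: HC.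
- by move=> x hx; rewrite E.
Qed.

Lemma mxprim_int (b a : R) m n (F : R -> 'M[R]_(m,n)) (t : R) :
  b < a -> a < 0 -> mxC b F -> 0 <= t -> mxint `[0, t] F = mxprim a F t.
Proof.
move=> ba a0 HF t0.
rewrite (@mxFTC a _ _ (mxprim a F) F F) // ?mxprim0 ?subr0 //.
- exact: mxprim_D ba HF.
- exact: mxC_mono (ltW ba) HF.
Qed.

End MxCalc.

Section Uniq.
Variable R : realType.

Lemma mx_const (a : R) m n (Z : R -> 'M[R]_(m,n)) : a < 0 ->
  mxD a Z (fun _ => 0) -> forall t, a < t -> Z t = Z 0.
Proof.
move=> a0 HZ t at_; apply/matrixP => i j.
have key : forall u v, a < u -> u <= v -> Z v i j = Z u i j.
  move=> u v au uv.
  have H1 : forall x, x \in `]u, v[ -> is_derive x 1 (fun t => Z t i j) ((fun _ => 0) x).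
    move=> x; rewrite in_itv /= => /andP[ux _].
    by have := HZ x (lt_trans au ux) i j; rewrite mxE.
  have H2 : {within `[u, v], continuous (fun t => Z t i j)}.
    apply: continuous_in_subspaceT => y; rewrite inE /= in_itv /= => /andP[uy _].
    exact: (mxD_C HZ) y (lt_le_trans au uy) i j.
  have [c _ H] := MVT_segment uv H1 H2.
  by move: H; rewrite mul0r => /eqP; rewrite subr_eq0 => /eqP.
case: (leP 0 t) => [t0|t0].
  exact: key a0 t0.
by symmetry; apply: key at_ (ltW t0).
Qed.

Lemma expm_uniq (a : R) n (M : 'M[R]_n) (X : R -> 'M[R]_n) : a < 0 ->
  mxD a X (fun t => X t *m M) -> X 0 = 1%:M -> forall t, a < t -> X t = expm (t *: M).
Proof.
move=> a0 HX X0.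
pose N := - M.
have HE : forall Y : R -> 'M[R]_n, mxD a Y (fun t => Y t *m M) -> Y 0 = 1%:M ->
    forall t, a < t -> Y t *m expm (t *: N) = 1%:M.
  move=> Y HY Y0 t at_.
  have HZ : mxD a (fun t => Y t *m expm (t *: N)) (fun _ => 0).
    apply: mxD_eq (mxD_mul HY (mxD_expm (a:=a) N)) _ => x _.
    by rewrite -expm_comm mulmxA /N mulmxN mulNmx addrN.
  by rewrite (mx_const a0 HZ at_) Y0 mul1mx expm0.
have H1 := HE _ (mxD_expm (a:=a) M).
move=> t at_.
have H2 : expm (t *: N) *m expm (t *: M) = 1%:M.
  by apply: mulmx1C; apply: H1 => //; rewrite expm0.
by rewrite -[X t]mulmx1 -H2 mulmxA (HE X HX X0 t at_) mul1mx.
Qed.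

Lemma expm_shift n (M : 'M[R]_n) (c t : R) :
  expm (t *: (M - c%:M)) = expR (- c * t) *: expm (t *: M).
Proof.
pose a := - (`|t| + 1).
have a0 : a < 0 by rewrite /a oppr_lt0 ltr_pwDr.
have at_ : a < t.
  rewrite /a; have := ler_norm (- t); rewrite normrN; lra.
symmetry; apply: (expm_uniq (X := fun t => expR (- c * t) *: expm (t *: M)) a0 _ _ at_).
- apply: mxD_eq (mxD_scale (sD_expR (a:=a) (- c)) (mxD_expm (a:=a) M)) _ => x _.
  rewrite -scalemxAl mulmxBr mul_mx_scalar scalerBr scalerA.
  by apply/matrixP => i j; rewrite !mxE; ring.
- by rewrite mulr0 expR0 scale1r expm0.
Qed.

End Uniq.

Section LagE.
Variable R : realType.
Local Notation mu := (@lebesgue_measure R).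

Lemma mxint_tr (D : set R) m n (F : R -> 'M[R]_(m,n)) :
  mxint D (fun t => (F t)^T) = (mxint D F)^T.
Proof.
apply/matrixP => i j; rewrite !mxE.
by apply: eq_Rintegral => t _; rewrite mxE.
Qed.

Lemma mxint_ext (s : R) m n (F G : R -> 'M[R]_(m,n)) :
  (forall t, 0 <= t <= s -> F t = G t) -> mxint `[0, s] F = mxint `[0, s] G.
Proof.
move=> E; apply/matrixP => i j; rewrite !mxE.
by apply: eq_Rintegral => t; rewrite inE /= in_itv /= => /E ->.
Qed.

Lemma lagE_conv (a : R) (k dt : R) m n (F G : R -> 'M[R]_(m,n)) :
  a < 0 -> 0 < dt -> mxC a G -> (forall t, 0 <= t <= dt -> F t = G t) ->
  lagE k dt F = mxint `[0, dt] (fun t => (lag_const k dt * expR (- k * t)) *: G t).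
Proof.
move=> a0 dt0 HG E; rewrite /lagE; apply/matrixP => i j; rewrite !mxE.
pose h := fun t => lag_const k dt * expR (- k * t) * G t i j.
transitivity (\int[mu]_(t in setT) ((h \_ `[0, dt[) t)).
  apply: eq_Rintegral => t _; rewrite mxE patchE /lag_density.
  rewrite (_ : (t \in `[0, dt[%classic) = (0 <= t) && (t < dt)); last first.
    by apply/idP/idP; rewrite inE /= in_itv.
  case: ifP => [/andP[t0 tdt]|_]; last by rewrite mul0r.
  by rewrite /h E // t0 ltW.
rewrite -Rintegral_mkcond Rintegral_itv_bndo_bndc; last first.
  apply: (@integrableS _ _ _ mu `[0, dt]) => //.
    by apply: subset_itvl; rewrite bnd_simp.
  apply: continuous_compact_integrable; first exact: segment_compact.
  apply: continuous_in_subspaceT => y; rewrite inE /= in_itv /= => /andP[y0 _].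
  apply: (C_mulf (f := fun t => lag_const k dt * expR (- k * t)) (g := fun t => G t i j)).
    apply: (C_mulf (f := fun _ => lag_const k dt) (g := fun t => expR (- k * t))).
      exact: cst_continuous.
    exact: (sC_expR (a:=a)) y (lt_le_trans a0 y0).
  exact: HG y (lt_le_trans a0 y0) i j.
by apply: eq_Rintegral => t _; rewrite /h mxE.
Qed.

End LagE.

Section Main.
Variable R : realType.
Variables (nx nb : nat) (A : 'M[R]_nx) (u : 'cV[R]_nx) (L : 'M[R]_(nx, nb))
  (Q : 'M[R]_nb) (xa : 'cV[R]_nx) (Pa : 'M[R]_nx) (mu dt : R).
Hypothesis hmu : 0 < mu.
Hypothesis hdt : 0 < dt.

Local Notation ex t := (expR (- mu * t)).

Lemma scalar_mx0' n : ((0 : R)%:M : 'M[R]_n) = 0.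
Proof. by apply/matrixP => i j; rewrite !mxE mul0rn. Qed.

Lemma mxD_scal_cst (a k : R) m n (F F' : R -> 'M[R]_(m,n)) : mxD a F F' ->
  mxD a (fun t => k *: F t) (fun t => k *: F' t).
Proof.
move=> H; apply: mxD_eq (mxD_scale (f := fun _ => k) (f' := fun _ => 0) _ H) _.
  by move=> x _; apply: D_cstf.
by move=> x _; rewrite scale0r add0r.
Qed.

Lemma mxC_scal_cst (a k : R) m n (F : R -> 'M[R]_(m,n)) : mxC a F ->
  mxC a (fun t => k *: F t).
Proof. by move=> H; apply: mxC_scale => //; apply: sC_cst. Qed.

Definition Fp t := mxprim (-1) (fun s => expm (s *: A)) t.

Lemma Fp_D : mxD (-1) Fp (fun t => expm (t *: A)).
Proof. apply: (mxprim_D (b := -2)); [lra | exact: mxC_expm]. Qed.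

Lemma Fp_C a : -1 <= a -> mxC a Fp.
Proof. by move=> h; apply: (mxC_mono h); apply: mxD_C Fp_D. Qed.

Lemma Fp_int t : 0 <= t -> mxint `[0, t] (fun s => expm (s *: A)) = Fp t.
Proof.
move=> t0; rewrite /Fp; apply: (mxprim_int (b := -2) (a := -1)) => //.
  lra.
exact: mxC_expm.
Qed.

Lemma FpT_int t : 0 <= t -> mxint `[0, t] (fun s => expm (s *: A^T)) = (Fp t)^T.
Proof.
move=> t0; rewrite -Fp_int // -mxint_tr.
by congr mxint; apply/funext => s; exact: expm_tr.
Qed.

Lemma mean_eq t : 0 <= t -> mean_t A u xa t = expm (t *: A) *m xa + Fp t *m u.
Proof. by move=> t0; rewrite /mean_t Fp_int. Qed.

Definition P1 t := mxprim (-1) (fun s => expm (s *: (A - mu%:M)) *m xa) t.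
Definition Qx t := mxprim (-1/2) (fun s => ex s *: (Fp s *m u)) t.

Lemma P1_D : mxD (-1) P1 (fun s => expm (s *: (A - mu%:M)) *m xa).
Proof.
apply: (mxprim_D (b := -2)); first lra.
by apply: mxC_mul; [exact: mxC_expm|exact: mxC_cst].
Qed.

Lemma Qx_D : mxD (-1/2) Qx (fun s => ex s *: (Fp s *m u)).
Proof.
apply: (mxprim_D (b := -1)); first lra.
apply: mxC_scale; first exact: sC_expR.
by apply: mxC_mul; [exact: Fp_C|exact: mxC_cst].
Qed.

Lemma lagE_by m n (F G Phi phi : R -> 'M[R]_(m,n)) :
  mxC (-1/2) G -> (forall t, 0 <= t <= dt -> F t = G t) ->
  mxD (-1/2) Phi phi ->
  (forall t, 0 <= t <= dt -> (lag_const mu dt * ex t) *: G t = phi t) ->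
  lagE mu dt F = Phi dt - Phi 0.
Proof.
move=> HG E HD Ephi.
have a0 : (-1/2 : R) < 0 by lra.
rewrite (@lagE_conv _ (-1/2) mu dt _ _ F G a0 hdt HG E).
apply: (mxFTC a0 (ltW hdt) HD) => //.
apply: mxC_scale => //; apply: sC_mul; [exact: sC_cst|exact: sC_expR].
Qed.

Lemma mean_C : mxC (-1/2) (fun t => expm (t *: A) *m xa + Fp t *m u).
Proof.
apply: mxC_add.
  by apply: mxC_mul; [exact: mxC_expm|exact: mxC_cst].
by apply: mxC_mul; [apply: Fp_C; lra|exact: mxC_cst].
Qed.

Lemma xb_eq : birth_mean A u xa mu dt = lag_const mu dt *: (P1 dt + Qx dt).
Proof.
rewrite /birth_mean (lagE_by (G := fun t => expm (t *: A) *m xa + Fp t *m u)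
   (Phi := fun t => lag_const mu dt *: (P1 t + Qx t))
   (phi := fun t => lag_const mu dt *: (expm (t *: (A - mu%:M)) *m xa + ex t *: (Fp t *m u)))).
- by rewrite /P1 /Qx !mxprim0 addr0 scaler0 subr0.
- exact: mean_C.
- by move=> t /andP[t0 _]; exact: mean_eq.
- apply: mxD_scal_cst; apply: mxD_add; last exact: Qx_D.
  by apply: (mxD_mono _ P1_D); lra.
- move=> t _; rewrite expm_shift -scalemxAl -scalerDr scalerA.
  by rewrite mulrC.
Qed.


Lemma xb1_eq :
  row_mx (1%:M : 'M[R]_nx) (0 : 'M[R]_(nx, 1)) *m
    expm (dt *: (block_mx (A - mu%:M) xa 0 0 : 'M[R]_(nx + 1)))
    *m col_mx (0 : 'M[R]_(nx, 1)) (1 : 'M[R]_1) = P1 dt.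
Proof.
pose Ab : 'M[R]_(nx + 1) := block_mx (A - mu%:M) xa 0 0.
have X1 : forall t, -1 < t ->
    block_mx (expm (t *: (A - mu%:M))) (P1 t) 0 (1%:M : 'M[R]_1) = expm (t *: Ab).
  apply: (expm_uniq (X := fun t => block_mx (expm (t *: (A - mu%:M))) (P1 t) 0 (1%:M : 'M[R]_1))).
  - lra.
  - apply: mxD_eq (mxD_block (mxD_expm (a := -1) (A - mu%:M)) P1_D (mxD_cst (a := -1) 0) (mxD_cst (a := -1) 1%:M)) _.
    move=> x _.
    by rewrite /Ab mulmx_block !mulmx0 !mul0mx !addr0.
  - by rewrite expm0 /P1 mxprim0 -scalar_mx_block.
have hdt1 : -1 < dt.
  by apply: lt_trans hdt; rewrite ltrN10.
rewrite -/Ab -(X1 dt hdt1).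
by rewrite mul_row_block !mul1mx !mul0mx !addr0 mul_row_col mulmx0 add0r mulmx1.
Qed.

Definition Pp t := ex t *: (Fp t *m u).
Definition Rr t : 'M[R]_1 := ((1 - ex t) / mu)%:M.

Lemma Pp_D : mxD (-1/2) Pp
  (fun t => (- mu * ex t) *: (Fp t *m u) + ex t *: (expm (t *: A) *m u + Fp t *m 0)).
Proof.
apply: mxD_scale; first exact: sD_expR.
apply: mxD_mul; last exact: mxD_cst.
by apply: (mxD_mono _ Fp_D); lra.
Qed.

Lemma Rr_sD (a : R) : sD a (fun t => (1 - ex t) / mu) (fun t => ex t).
Proof.
move=> x _.
apply: is_derive_eq (D_mulf (D_addf (D_cstf 1 x) (D_oppf (D_expR (- mu) x)))
  (D_cstf (mu^-1) x)) _.
have mu0 : mu != 0 by rewrite gt_eqF.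
by field.
Qed.

Lemma xb2_eq :
  row_mx (1%:M : 'M[R]_nx) (0 : 'M[R]_(nx, 1 + 1)) *m
    expm (dt *: (block_mx (A - mu%:M) (row_mx u 0) 0
             (block_mx ((- mu)%:M : 'M[R]_1) 1 0 0) : 'M[R]_(nx + (1 + 1))))
    *m col_mx (0 : 'M[R]_(nx, 1)) (col_mx (0 : 'M[R]_1) (1 : 'M[R]_1)) = Qx dt.
Proof.
pose Abu : 'M[R]_(nx + (1 + 1)) := block_mx (A - mu%:M) (row_mx u 0) 0
             (block_mx ((- mu)%:M : 'M[R]_1) 1 0 0).
pose X2 := fun t => (block_mx (expm (t *: (A - mu%:M))) (row_mx (Pp t) (Qx t)) 0
   (block_mx ((ex t)%:M : 'M[R]_1) (Rr t) 0 (1%:M : 'M[R]_1)) : 'M[R]_(nx + (1 + 1))).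
have X2E : forall t, -1/2 < t -> X2 t = expm (t *: Abu).
  apply: (expm_uniq (X := X2)).
  - lra.
  - apply: mxD_eq (mxD_block (mxD_expm (a := -1/2) (A - mu%:M)) (mxD_row Pp_D Qx_D)
      (mxD_cst (a := -1/2) 0)
      (mxD_block (mxD_scalar (sD_expR (a := -1/2) (- mu))) (mxD_scalar (Rr_sD (a := -1/2)))
         (mxD_cst (a := -1/2) 0) (mxD_cst (a := -1/2) 1%:M))) _.
    move=> x _; rewrite /X2 /Abu mulmx_block.
    congr block_mx.
    + by rewrite mulmx0 addr0.
    + rewrite mul_mx_row mul_row_block !mulmx0 !addr0 add_row_mx add0r mulmx1.
      congr row_mx.
      by rewrite /Pp expm_shift mul_mx_scalar -scalemxAl scalerA addrC.
    + by rewrite mul0mx mulmx0 addr0.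
    + rewrite mul0mx add0r mulmx_block.
      congr block_mx.
      * by rewrite mulmx0 addr0 -scalar_mxM mulrC.
      * by rewrite mulmx1 mulmx0 addr0.
      * by rewrite mul0mx mulmx0 addr0.
      * by rewrite mul0mx mulmx0 addr0.
  - rewrite /X2 expm0 /Pp /Qx /Rr /Fp !mxprim0 mul0mx scaler0 row_mx0.
    by rewrite mulr0 expR0 subrr mul0r scalar_mx0' -!scalar_mx_block.
have hdt2 : -1/2 < dt by apply: lt_trans hdt; rewrite ltr_pdivrMr ?mul0r ?ltrN10.
rewrite -/Abu -(X2E dt hdt2) /X2.
rewrite mul_row_block !mul1mx !mul0mx !addr0 mul_row_col mulmx0 add0r.
by rewrite mul_row_col mulmx0 add0r mulmx1.
Qed.

Lemma D_ne0 : 1 - ex dt != 0.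
Proof.
rewrite subr_eq0 eq_sym; apply/negP => /eqP h.
have : ex dt < 1 by rewrite expR_lt1 mulNr oppr_lt0 mulr_gt0.
by rewrite h ltxx.
Qed.

Definition g1 t := expm (t *: A) *m L *m Q *m L^T *m expm (t *: A^T).
Definition Gp t := mxprim (-1) g1 t.
Definition Cb := L *m Q *m L^T + mu *: Pa.
Definition hh t := ex t *: (expm (t *: A) *m Cb *m expm (t *: A^T)).
Definition Hp t := mxprim (-1) hh t.

Lemma g1_C a : mxC a g1.
Proof.
rewrite /g1; apply: mxC_mul; last exact: mxC_expm.
do 3 (apply: mxC_mul; last exact: mxC_cst).
exact: mxC_expm.
Qed.

Lemma hh_C a : mxC a hh.
Proof.
rewrite /hh; apply: mxC_scale; first exact: sC_expR.
apply: mxC_mul; last exact: mxC_expm.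
apply: mxC_mul; last exact: mxC_cst.
exact: mxC_expm.
Qed.

Lemma Gp_D : mxD (-1) Gp g1.
Proof. by apply: (mxprim_D (b := -2)); [lra|exact: g1_C]. Qed.

Lemma Hp_D : mxD (-1) Hp hh.
Proof. by apply: (mxprim_D (b := -2)); [lra|exact: hh_C]. Qed.

Lemma Gp_int t : 0 <= t -> mxint `[0, t] g1 = Gp t.
Proof.
move=> t0; rewrite /Gp; apply: (mxprim_int (b := -2) (a := -1)) => //; first lra.
exact: g1_C.
Qed.

Lemma Hp_int t : 0 <= t -> mxint `[0, t] hh = Hp t.
Proof.
move=> t0; rewrite /Hp; apply: (mxprim_int (b := -2) (a := -1)) => //; first lra.
exact: hh_C.
Qed.

Definition Gc t := expm (t *: A) *m Pa *m expm (t *: A^T) + Gp t.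

Lemma cov_eq t : 0 <= t -> cov_t A L Q Pa t = Gc t.
Proof. by move=> t0; rewrite /Gc -Gp_int. Qed.

Lemma Gc_C : mxC (-1/2) Gc.
Proof.
apply: mxC_add; last by apply: (mxD_C (F' := g1)); apply: (mxD_mono _ Gp_D); lra.
apply: mxC_mul; last exact: mxC_expm.
by apply: mxC_mul; [exact: mxC_expm|exact: mxC_cst].
Qed.

Definition Phic t := (1 / (1 - ex dt)) *: (- (ex t *: Gp t) + Hp t).

Lemma Phic_D : mxD (-1/2) Phic
  (fun t => (1 / (1 - ex dt)) *: (- ((- mu * ex t) *: Gp t + ex t *: g1 t) + hh t)).
Proof.
apply: mxD_scal_cst; apply: mxD_add.
  apply: mxD_opp; apply: mxD_scale; first exact: sD_expR.
  by apply: (mxD_mono _ Gp_D); lra.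
by apply: (mxD_mono _ Hp_D); lra.
Qed.

Lemma Phic_pt t : (lag_const mu dt * ex t) *: Gc t =
  (1 / (1 - ex dt)) *: (- ((- mu * ex t) *: Gp t + ex t *: g1 t) + hh t).
Proof.
rewrite /Gc /g1 /hh /Cb /lag_const.
rewrite mulmxDr mulmxDl -scalemxAr -scalemxAl !mulmxA.
move: (expm (t *: A) *m Pa *m expm (t *: A^T)) (Gp t)
  (expm (t *: A) *m L *m Q *m L^T *m expm (t *: A^T)) => X Y Z.
have := D_ne0; move: (1 - ex dt) => D D0.
by apply/matrixP => i j; rewrite !mxE; field.
Qed.

Lemma cov_lagE : lagE mu dt (cov_t A L Q Pa) =
  - ((ex dt / (1 - ex dt)) *: mxint `[0, dt] g1) +
  (1 / (1 - ex dt)) *: mxint `[0, dt] (fun t => expm (t *: (A - (mu / 2)%:M)) *m Cb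
                                          *m expm (t *: (A - (mu / 2)%:M)^T)).
Proof.
rewrite (lagE_by (G := Gc) (Phi := Phic) Gc_C _ Phic_D); last 2 first.
- by move=> t /andP[t0 _]; exact: cov_eq.
- by move=> t _; exact: Phic_pt.
have -> : Phic 0 = 0 by rewrite /Phic /Gp /Hp !mxprim0 scaler0 oppr0 add0r scaler0.
rewrite subr0 /Phic.
rewrite Gp_int; last exact: ltW.
rewrite (@mxint_ext _ _ _ _ _ hh); last first.
  move=> t _.
  rewrite (_ : (A - (mu / 2)%:M)^T = A^T - (mu / 2)%:M); last first.
    by rewrite linearB /= tr_scalar_mx.
  rewrite !expm_shift /hh.
  rewrite -scalemxAl -scalemxAr -scalemxAl scalerA -expRD.
  by congr (expR _ *: _); field.
rewrite Hp_int; last exact: ltW.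
rewrite scalerDr scalerN scalerA.
by congr (- (_ *: _) + _); rewrite mulrC mul1r.
Qed.

Local Notation cc := (lag_const mu dt).
Local Notation dd := (1 / (1 - ex dt)).

Definition Gm t := (expm (t *: A) *m xa + Fp t *m u) *m (expm (t *: A) *m xa + Fp t *m u)^T.
Definition kxx s := ex s *: (expm (s *: A) *m xa *m xa^T *m expm (s *: A^T)).
Definition kxu s := ex s *: (expm (s *: A) *m xa *m (Fp s *m u)^T).
Definition kuu s := ex s *: (expm (s *: A) *m u *m (Fp s *m u)^T).
Definition Ixx t := mxprim (-1) kxx t.
Definition Ixu t := mxprim (-1/2) kxu t.
Definition Iuu t := mxprim (-1/2) kuu t.
Definition Huu t := Fp t *m u *m (Fp t *m u)^T.

Lemma kxx_C a : mxC a kxx.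
Proof.
rewrite /kxx; apply: mxC_scale; first exact: sC_expR.
apply: mxC_mul; last exact: mxC_expm.
do 2 (apply: mxC_mul; last exact: mxC_cst).
exact: mxC_expm.
Qed.

Lemma FpuT_C : mxC (-1) (fun s => (Fp s *m u)^T).
Proof. by apply: mxC_tr; apply: mxC_mul; [apply: Fp_C; lra|exact: mxC_cst]. Qed.

Lemma kxu_C : mxC (-1) kxu.
Proof.
rewrite /kxu; apply: mxC_scale; first exact: sC_expR.
apply: mxC_mul; last exact: FpuT_C.
by apply: mxC_mul; [exact: mxC_expm|exact: mxC_cst].
Qed.

Lemma kuu_C : mxC (-1) kuu.
Proof.
rewrite /kuu; apply: mxC_scale; first exact: sC_expR.
apply: mxC_mul; last exact: FpuT_C.
by apply: mxC_mul; [exact: mxC_expm|exact: mxC_cst].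
Qed.

Lemma Ixx_D : mxD (-1/2) Ixx kxx.
Proof.
apply: (mxD_mono (a := -1)); first lra.
by apply: (mxprim_D (b := -2)); [lra|exact: kxx_C].
Qed.

Lemma Ixu_D : mxD (-1/2) Ixu kxu.
Proof. by apply: (mxprim_D (b := -1)); [lra|exact: kxu_C]. Qed.

Lemma Iuu_D : mxD (-1/2) Iuu kuu.
Proof. by apply: (mxprim_D (b := -1)); [lra|exact: kuu_C]. Qed.

Lemma Fpu_D : mxD (-1/2) (fun t => Fp t *m u)
  (fun t => expm (t *: A) *m u + Fp t *m 0).
Proof.
apply: mxD_mul; last exact: mxD_cst.
by apply: (mxD_mono _ Fp_D); lra.
Qed.

Lemma Huu_D : mxD (-1/2) Huu (fun t =>
  (expm (t *: A) *m u + Fp t *m 0) *m (Fp t *m u)^T +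
  Fp t *m u *m (expm (t *: A) *m u + Fp t *m 0)^T).
Proof. exact: mxD_mul Fpu_D (mxD_tr Fpu_D). Qed.

Definition Phim t := cc *: Ixx t + cc *: Ixu t + cc *: (Ixu t)^T +
  dd *: (- (ex t *: Huu t) + Iuu t + (Iuu t)^T).

Definition phim t := cc *: kxx t + cc *: kxu t + cc *: (kxu t)^T +
  dd *: (- ((- mu * ex t) *: Huu t + ex t *:
     ((expm (t *: A) *m u + Fp t *m 0) *m (Fp t *m u)^T +
      Fp t *m u *m (expm (t *: A) *m u + Fp t *m 0)^T)) + kuu t + (kuu t)^T).

Lemma Phim_D : mxD (-1/2) Phim phim.
Proof.
apply: mxD_add; last first.
  apply: mxD_scal_cst; apply: mxD_add; last exact: mxD_tr Iuu_D.
  apply: mxD_add; last exact: Iuu_D.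
  apply: mxD_opp; apply: mxD_scale; first exact: sD_expR.
  exact: Huu_D.
apply: mxD_add; last by apply: mxD_scal_cst; apply: mxD_tr Ixu_D.
apply: mxD_add; [apply: mxD_scal_cst; exact: Ixx_D | apply: mxD_scal_cst; exact: Ixu_D].
Qed.

Lemma trZM m (k : R) (X Y : 'M[R]_(nx, m)) : (k *: (X *m Y^T))^T = k *: (Y *m X^T).
Proof. by rewrite linearZ /= trmx_mul trmxK. Qed.

Lemma Phim_pt t : (cc * ex t) *: Gm t = phim t.
Proof.
rewrite /Gm /phim /kxx /kxu /kuu /Huu /lag_const !trZM expm_tr.
have -> : expm (t *: A) *m xa *m xa^T *m (expm (t *: A))^T =
    (expm (t *: A) *m xa) *m (expm (t *: A) *m xa)^T by rewrite trmx_mul mulmxA.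
rewrite !mulmx0 !addr0.
move: (expm (t *: A) *m xa) (Fp t *m u) (expm (t *: A) *m u) => P V W.
rewrite linearD /= !mulmxDl !mulmxDr.
move: (P *m P^T) (P *m V^T) (V *m P^T) (V *m V^T) (W *m V^T) (V *m W^T)
  => X1 X2 X3 X4 X5 X6.
have := D_ne0; move: (1 - ex dt) => D D0.
by apply/matrixP => i j; rewrite !mxE; field.
Qed.

Lemma Gm_C : mxC (-1/2) Gm.
Proof.
rewrite /Gm; apply: mxC_mul; first exact: mean_C.
by apply: mxC_tr; exact: mean_C.
Qed.

Lemma mm_eq t : 0 <= t ->
  mean_t A u xa t *m (mean_t A u xa t)^T = Gm t.
Proof. by move=> t0; rewrite /Gm mean_eq. Qed.

Lemma mm_lagE : lagE mu dt (fun t => mean_t A u xa t *m (mean_t A u xa t)^T)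
  = Phim dt - Phim 0.
Proof.
apply: (lagE_by (G := Gm) Gm_C _ Phim_D).
- by move=> t /andP[t0 _]; exact: mm_eq.
- by move=> t _; exact: Phim_pt.
Qed.

Lemma cov_lagE0 : lagE mu dt (cov_t A L Q Pa) = Phic dt - Phic 0.
Proof.
apply: (lagE_by (G := Gc) Gc_C _ Phic_D).
- by move=> t /andP[t0 _]; exact: cov_eq.
- by move=> t _; exact: Phic_pt.
Qed.

Lemma sum_lagE : lagE mu dt (fun t => cov_t A L Q Pa t +
    mean_t A u xa t *m (mean_t A u xa t)^T) =
  lagE mu dt (cov_t A L Q Pa) + lagE mu dt (fun t => mean_t A u xa t *m (mean_t A u xa t)^T).
Proof.
rewrite cov_lagE0 mm_lagE.
rewrite (lagE_by (G := fun t => Gc t + Gm t) (mxC_add Gc_C Gm_C) _ (mxD_add Phic_D Phim_D)).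
- by rewrite opprD addrACA.
- by move=> t /andP[t0 _]; rewrite cov_eq // mm_eq.
- by move=> t _; rewrite scalerDr Phic_pt Phim_pt.
Qed.

Lemma Phim0 : Phim 0 = 0.
Proof.
rewrite /Phim /Ixx /Ixu /Iuu /Huu /Fp !mxprim0 !mul0mx ?trmx0 ?mulmx0.
by rewrite !scaler0 oppr0 !addr0 scaler0 addr0.
Qed.

Lemma Ixx_int t : 0 <= t -> mxint `[0, t] kxx = Ixx t.
Proof.
move=> t0; rewrite /Ixx; apply: (mxprim_int (b := -2) (a := -1)) => //.
  lra.
exact: kxx_C.
Qed.

Lemma Ixu_int t : 0 <= t -> mxint `[0, t] kxu = Ixu t.
Proof.
move=> t0; rewrite /Ixu; apply: (mxprim_int (b := -1) (a := -1/2)) => //.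
  lra.
exact: kxu_C.
Qed.

Lemma Iuu_int t : 0 <= t -> mxint `[0, t] kuu = Iuu t.
Proof.
move=> t0; rewrite /Iuu; apply: (mxprim_int (b := -1) (a := -1/2)) => //.
  lra.
exact: kuu_C.
Qed.

Lemma mm_final :
  lagE mu dt (fun t => mean_t A u xa t *m (mean_t A u xa t)^T) =
  cc *: mxint `[0, dt] (fun t => expm (t *: (A - (mu / 2)%:M)) *m xa *m xa^T
                                   *m expm (t *: (A - (mu / 2)%:M)^T))
  + cc *: mxint `[0, dt] (fun t => expm (t *: (A - mu%:M)) *m xa *m u^T
                                   *m mxint `[0, t] (fun tau => expm (tau *: A^T)))
  + (cc *: mxint `[0, dt] (fun t => expm (t *: (A - mu%:M)) *m xa *m u^T
                                   *m mxint `[0, t] (fun tau => expm (tau *: A^T))))^T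
  + (- ((ex dt / (1 - ex dt)) *: (mxint `[0, dt] (fun tau => expm (tau *: A)) *m u *m u^T
          *m mxint `[0, dt] (fun tau => expm (tau *: A^T))))
     + dd *: mxint `[0, dt] (fun t => expm (t *: (A - mu%:M)) *m u *m u^T
                                   *m mxint `[0, t] (fun tau => expm (tau *: A^T)))
     + (dd *: mxint `[0, dt] (fun t => expm (t *: (A - mu%:M)) *m u *m u^T
                                   *m mxint `[0, t] (fun tau => expm (tau *: A^T))))^T).
Proof.
have dt0 : 0 <= dt by exact: ltW.
rewrite mm_lagE Phim0 subr0.
rewrite (@mxint_ext _ _ _ _ _ kxx); last first.
  move=> t _.
  rewrite (_ : (A - (mu / 2)%:M)^T = A^T - (mu / 2)%:M); last first.
    by rewrite linearB /= tr_scalar_mx.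
  rewrite !expm_shift /kxx.
  rewrite -!scalemxAl -!scalemxAr !scalerA -expRD.
  by congr (expR _ *: _); field.
rewrite Ixx_int //.
rewrite (@mxint_ext _ _ _ _ _ kxu); last first.
  move=> t /andP[t0 _] /=.
  rewrite FpT_int // expm_shift /kxu -!scalemxAl.
  by rewrite trmx_mul !mulmxA.
rewrite Ixu_int //.
rewrite Fp_int // FpT_int //.
rewrite (_ : Fp dt *m u *m u^T *m (Fp dt)^T = Huu dt); last first.
  by rewrite /Huu trmx_mul !mulmxA.
rewrite (@mxint_ext _ _ _ _ _ kuu); last first.
  move=> t /andP[t0 _] /=.
  rewrite FpT_int // expm_shift /kuu -!scalemxAl.
  by rewrite trmx_mul !mulmxA.
rewrite Iuu_int //.
rewrite /Phim -/(Ixx dt) -/(Ixu dt) -/(Iuu dt) !linearZ /=.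
move: (Ixx dt) (Ixu dt) (Iuu dt) (Huu dt) => X1 X2 X3 X4.
have := D_ne0; move: (1 - ex dt) => D D0.
by apply/matrixP => i j; rewrite !mxE; field.
Qed.
End Main.

Unset Implicit Arguments.
Set Strict Implicit.

Theorem proposition1 (R : realType) (nx nb : nat) (hnx : (0 < nx)%N) (hnb : (0 < nb)%N)
  (A : 'M[R]_nx) (u : 'cV[R]_nx) (L : 'M[R]_(nx, nb)) (Q : 'M[R]_nb)
  (xa : 'cV[R]_nx) (Pa : 'M[R]_nx) (mu dt : R)
  (hQ : is_cov Q) (hPa : is_cov Pa) (hmu : 0 < mu) (hdt : 0 < dt) :
  let c := mu / (1 - expR (- mu * dt)) in
  let e := expR (- mu * dt) / (1 - expR (- mu * dt)) in
  let d := 1 / (1 - expR (- mu * dt)) in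
  let Ab : 'M[R]_(nx + 1) := block_mx (A - mu%:M) xa 0 0 in
  let Abu : 'M[R]_(nx + (1 + 1)) :=
    block_mx (A - mu%:M) (row_mx u 0) 0
             (block_mx ((- mu)%:M : 'M[R]_1) 1 0 0) in
  let xb1 : 'cV[R]_nx :=
    c *: (row_mx (1%:M : 'M[R]_nx) (0 : 'M[R]_(nx, 1)) *m expm (dt *: Ab)
          *m col_mx (0 : 'M[R]_(nx, 1)) (1 : 'M[R]_1)) in
  let xb2 : 'cV[R]_nx :=
    c *: (row_mx (1%:M : 'M[R]_nx) (0 : 'M[R]_(nx, 1 + 1)) *m expm (dt *: Abu)
          *m col_mx (0 : 'M[R]_(nx, 1)) (col_mx (0 : 'M[R]_1) (1 : 'M[R]_1))) in
  let xb := birth_mean A u xa mu dt in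
  let Ah := A - (mu / 2)%:M in
  let Am := A - mu%:M in
  let Cb := L *m Q *m L^T + mu *: Pa in
  let ECT : 'M[R]_nx :=
    - (e *: mxint `[0, dt] (fun tau => expm (tau *: A) *m L *m Q *m L^T *m expm (tau *: A^T)))
    + d *: mxint `[0, dt] (fun t => expm (t *: Ah) *m Cb *m expm (t *: Ah^T)) in
  let Sxx : 'M[R]_nx :=
    c *: mxint `[0, dt] (fun t => expm (t *: Ah) *m xa *m xa^T *m expm (t *: Ah^T)) in
  let Sxu : 'M[R]_nx :=
    c *: mxint `[0, dt] (fun t => expm (t *: Am) *m xa *m u^T
                                   *m mxint `[0, t] (fun tau => expm (tau *: A^T))) in
  let Suu1 : 'M[R]_nx :=
    e *: (mxint `[0, dt] (fun tau => expm (tau *: A)) *m u *m u^T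
          *m mxint `[0, dt] (fun tau => expm (tau *: A^T))) in
  let Suu2 : 'M[R]_nx :=
    d *: mxint `[0, dt] (fun t => expm (t *: Am) *m u *m u^T
                                   *m mxint `[0, t] (fun tau => expm (tau *: A^T))) in
  let Suu := - Suu1 + Suu2 + Suu2^T in
  let CmT : 'M[R]_nx :=
    lagE mu dt (fun t => mean_t A u xa t *m (mean_t A u xa t)^T) - xb *m xb^T in
  [/\ xb = xb1 + xb2,
      lagE mu dt (cov_t A L Q Pa) = ECT,
      CmT = Sxx + Sxu + Sxu^T + Suu - xb *m xb^T
    & birth_cov A L Q Pa u xa mu dt = CmT + lagE mu dt (cov_t A L Q Pa)].
Proof.
move=> c e d Ab Abu xb1 xb2 xb Ah Am Cb ECT Sxx Sxu Suu1 Suu2 Suu CmT.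
have E1 : xb = xb1 + xb2.
  rewrite /xb /xb1 /xb2 /Ab /Abu xb_eq //.
  rewrite xb1_eq // xb2_eq //.
  by rewrite /c -scalerDr.
have E2 : lagE mu dt (cov_t A L Q Pa) = ECT.
  by rewrite cov_lagE.
have E3 : CmT = Sxx + Sxu + Sxu^T + Suu - xb *m xb^T.
  by rewrite /CmT mm_final.
split => //.
rewrite /birth_cov /CmT sum_lagE //.
by rewrite -/xb -addrA addrC.
Qed.
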